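(* A set $F$ of pairs $(K,a)$ ($K$ a graph, $a\in\mathbb{Z}_2^{*V(K)}$, taken up to isomorphism) is an easy full graph fibration if and only if $F(K)$ is a normal subgroup of $\mathbb{Z}_2^{*V(K)}$ for every graph $K$ and, for every graph homomorphism $\phi\colon H\to K$ between any two graphs, $\phi(F(H))\subset F(K)$.
   Context: Graphs are finite, undirected, without multiple edges, loops allowed, considered up to isomorphism; $N_k$ is the edgeless graph on $k$ vertices. A graph homomorphism is a vertex map sending edges (including loops) to edges. For a set $V$, $\mathbb{Z}_2^{*V}$ is the group generated by $V$ subject to $v^2=e$; a map $\phi\colon V\to V'$ induces a homomorphism $\mathbb{Z}_2^{*V}\to\mathbb{Z}_2^{*V'}$, also denoted $\phi$. Pairs are taken up to the equivalence $(K,a)\equiv(K',\phi(a))$ for isomorphisms $\phi\colon K\to K'$, and $F(K):=\{a\mid (K,a)\in F\}$. For a partition $\pi$ of $V(K)$, the quotient $K/\pi$ has the blocks as vertices with an edge between two (possibly equal) blocks iff $K$ has an edge between some of their elements; $q_\pi\colon V(K)\to V(K/\pi)$ the quotient map. A vertex overlap of graphs $K,H$ is a subset $f\subset V(K)\times V(H)$ in which each vertex occurs at most once; $K\cup_fH$ is the quotient of $K\sqcup H$ identifying $v$ with $w$ for $(v,w)\in f$; $f_K,f_H$ are the induced maps into $V(K\cup_fH)$. A graph fibration is such a set $F$ with $(N_0,e),(N_1,e)\in F$ and: (F1) each $F(K)$ is empty or a normal subgroup; (F2) $\phi(F(K))=F(K)$ for every automorphism $\phi$ of $K$; (F3) if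 $(K,a),(H,b)\in F$ and $f$ is a vertex overlap, then $(K\cup_fH,f_K(a)f_H(b))\in F$. It is full if $F(K)\ne\emptyset$ for all graphs $K$, and easy if (F4): for $F(K)\neq\emptyset$ and every partition $\pi$ of $V(K)$, $q_\pi(F(K))\subset F(K/\pi)$. *)

(* Defs.v *)
From mathcomp Require Import all_boot.
Set Implicit Arguments. Unset Strict Implicit. Unset Printing Implicit Defensive.

(* ---------- Graphs: finite vertex type, symmetric adjacency (loops allowed) *)
Record graph := Graph { vert : finType; adj : rel vert; adj_sym : symmetric adj }.

Lemma nil_rel_sym k : symmetric (fun _ _ : 'I_k => false). Proof. by []. Qed.
Definition N_ (k : nat) : graph := @Graph 'I_k (fun _ _ => false) (@nil_rel_sym k).

Definition ghom (H K : graph) (phi : vert H -> vert K) : Prop :=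
  forall x y, adj x y -> adj (phi x) (phi y).
Definition giso (H K : graph) (phi : vert H -> vert K) : Prop :=
  bijective phi /\ forall x y, adj (phi x) (phi y) = adj x y.
Definition gaut (K : graph) (phi : vert K -> vert K) : Prop := giso phi.

(* ---------- The group Z_2^{*V}: reduced words (no two equal consecutive letters) *)
Definition reducedw (V : eqType) (s : seq V) : bool := sorted (fun x y => x != y) s.
Definition word (V : eqType) := {s : seq V | reducedw s}.

Definition push (V : eqType) (x : V) (s : seq V) : seq V :=
  if s is y :: s' then (if x == y then s' else x :: s) else [:: x].

Lemma push_reduced (V : eqType) (x : V) s : reducedw s -> reducedw (push x s).
Proof.
case: s => [|y s] //= Hs.
case: eqP => [_|/eqP Hxy]; first by case: s Hs => //= z s /andP[].
by rewrite /reducedw /= Hxy.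
Qed.

Lemma foldr_push_reduced (V : eqType) (s t : seq V) :
  reducedw t -> reducedw (foldr (@push V) t s).
Proof. by elim: s => //= x s IH Ht; apply: push_reduced; apply: IH. Qed.

Definition wone (V : eqType) : word V := exist _ [::] (erefl true).
Definition wmul (V : eqType) (a b : word V) : word V :=
  exist _ (foldr (@push V) (sval b) (sval a)) (foldr_push_reduced (sval a) (svalP b)).
Lemma rev_reduced (V : eqType) (s : seq V) : reducedw s -> reducedw (rev s).
Proof.
rewrite /reducedw rev_sorted; case: s => //= x s.
by rewrite (@eq_path _ _ (fun x y => x != y)) // => u v /=; rewrite eq_sym.
Qed.
Definition winv (V : eqType) (a : word V) : word V :=
  exist _ (rev (sval a)) (rev_reduced (svalP a)).

Definition wmap_seq (V V' : eqType) (phi : V -> V') (s : seq V) : seq V' :=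
  foldr (fun x acc => push (phi x) acc) [::] s.
Lemma wmap_seq_reduced (V V' : eqType) (phi : V -> V') s : reducedw (wmap_seq phi s).
Proof. by elim: s => //= x s IH; apply: push_reduced. Qed.
Definition wmap (V V' : eqType) (phi : V -> V') (a : word V) : word V' :=
  exist _ (wmap_seq phi (sval a)) (wmap_seq_reduced phi (sval a)).

Definition normal_subgroup (V : eqType) (S : word V -> Prop) : Prop :=
  [/\ S (wone V),
      (forall a b, S a -> S b -> S (wmul a b)),
      (forall a, S a -> S (winv a)) &
      (forall g a, S a -> S (wmul (wmul (winv g) a) g))].

Section Quotient.
Variables (K : graph) (P : {set {set vert K}}) (hP : partition P [set: vert K]).

Definition qvert : finType := {B : {set vert K} | B \in P}.
Definition qadj : rel qvert :=
  fun B C => [exists x, [exists y, [&& x \in sval B, y \in sval C & adj x y]]].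
Lemma qadj_sym : symmetric qadj.
Proof.
move=> B C; apply/existsP/existsP => -[x /existsP[y /and3P[Hx Hy Hxy]]];
  by exists y; apply/existsP; exists x; rewrite Hx Hy adj_sym.
Qed.
Definition quot : graph := @Graph qvert qadj qadj_sym.

Lemma pblock_in (x : vert K) : pblock P x \in P.
Proof. by apply: pblock_mem; case/and3P: hP => /eqP -> _ _; rewrite inE. Qed.
Definition qmap (x : vert K) : vert quot := exist _ (pblock P x) (pblock_in x).
End Quotient.

Record overlap (K H : graph) := Overlap {
  ovl : {set vert K * vert H};
  ovl_ok : forall p q, p \in ovl -> q \in ovl -> (p.1 == q.1) = (p.2 == q.2) }.

Section Glue.
Variables (K H : graph) (f : overlap K H).

Definition sum_adj : rel (vert K + vert H)%type := fun x y =>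
  match x, y with
  | inl u, inl v => adj u v
  | inr u, inr v => adj u v
  | _, _ => false
  end.
Lemma sum_adj_sym : symmetric sum_adj.
Proof. by case=> u [] v //=; rewrite adj_sym. Qed.
Definition gsum : graph := @Graph (vert K + vert H)%type sum_adj sum_adj_sym.

(* representative: identifies inr w with inl v whenever (v,w) \in f *)
Definition grep (x : vert gsum) : vert gsum :=
  match x with
  | inl v => inl v
  | inr w => if [pick v | (v, w) \in ovl f] is Some v then inl v else inr w
  end.
Definition gpart : {set {set vert gsum}} := preim_partition grep [set: vert gsum].
Definition glue : graph := @quot gsum gpart.
Definition fK (v : vert K) : vert glue := @qmap gsum gpart (preim_partitionP grep [set: vert gsum]) (inl v).
Definition fH (w : vert H) : vert glue := @qmap gsum gpart (preim_partitionP grep [set: vert gsum]) (inr w).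
End Glue.

Definition fset_pairs := forall K : graph, word (vert K) -> Prop.

(* F is a set of equivalence classes: closed under (K,a) == (K', phi a) *)
Definition iso_closed (F : fset_pairs) : Prop :=
  forall (K K' : graph) (phi : vert K -> vert K'), giso phi ->
    forall a, F K a -> F K' (wmap phi a).

Definition F1 (F : fset_pairs) : Prop :=
  forall K, (forall a, ~ F K a) \/ normal_subgroup (F K).
Definition F2 (F : fset_pairs) : Prop :=
  forall K (phi : vert K -> vert K), gaut phi ->
    forall b, F K b <-> exists2 a, F K a & b = wmap phi a.
Definition F3 (F : fset_pairs) : Prop :=
  forall K H (f : overlap K H) a b, F K a -> F H b ->
    F (glue f) (wmul (wmap (@fK K H f) a) (wmap (@fH K H f) b)).

Definition graph_fibration (F : fset_pairs) : Prop :=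
  [/\ F (N_ 0) (wone _), F (N_ 1) (wone _), F1 F, F2 F & F3 F].

Definition full (F : fset_pairs) : Prop := forall K, exists a, F K a.

Definition easy (F : fset_pairs) : Prop :=
  forall K, (exists a, F K a) ->
    forall (P : {set {set vert K}}) (hP : partition P [set: vert K]) a,
      F K a -> F (quot P) (wmap (qmap hP) a).

(* Main.v *)
Require Import Defs.
From mathcomp Require Import all_boot.
Set Implicit Arguments. Unset Strict Implicit. Unset Printing Implicit Defensive.

Lemma push_inv (V : eqType) (z : V) u : reducedw u -> push z (push z u) = u.
Proof.
case: u => [|y u] /=; first by rewrite eqxx.
case: eqP => [->|/eqP Hne] Hr /=; last by rewrite eqxx.
case: u Hr => [|w u] //= /andP[Hyw _]; by rewrite (negbTE Hyw).
Qed.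

Lemma wmap_seq_push (V V' : eqType) (f : V -> V') y t :
  wmap_seq f (push y t) = push (f y) (wmap_seq f t).
Proof.
case: t => [|x t] //=.
case: eqP => [<-|_] //=.
by rewrite push_inv // wmap_seq_reduced.
Qed.

Lemma wmap_seq_comp (U V W : eqType) (f : U -> V) (g : V -> W) s :
  wmap_seq g (wmap_seq f s) = wmap_seq (fun x => g (f x)) s.
Proof. by elim: s => //= x s IH; rewrite wmap_seq_push IH. Qed.

Lemma wmap_seq_ext (V V' : eqType) (f g : V -> V') s :
  (forall x, f x = g x) -> wmap_seq f s = wmap_seq g s.
Proof. by move=> E; elim: s => //= x s ->; rewrite E. Qed.

Lemma wmap_seq_id (V : eqType) (s : seq V) : reducedw s -> wmap_seq id s = s.
Proof.
elim: s => //= x s IH Hr.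
rewrite IH; last exact: path_sorted Hr.
case: s Hr {IH} => [|y s] //= /andP[Hxy _]; by rewrite (negbTE Hxy).
Qed.

Lemma word_eq (V : eqType) (a b : word V) : sval a = sval b -> a = b.
Proof. by move=> E; apply: val_inj. Qed.

Lemma wmap_comp (U V W : eqType) (f : U -> V) (g : V -> W) a :
  wmap g (wmap f a) = wmap (fun x => g (f x)) a.
Proof. by apply: word_eq; rewrite /= wmap_seq_comp. Qed.

Lemma wmap_ext (V V' : eqType) (f g : V -> V') a :
  (forall x, f x = g x) -> wmap f a = wmap g a.
Proof. by move=> E; apply: word_eq; rewrite /= (wmap_seq_ext _ E). Qed.

Lemma wmap_id (V : eqType) (a : word V) : wmap id a = a.
Proof. by apply: word_eq; rewrite /= wmap_seq_id //; case: a. Qed.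

Lemma wmap_one (V V' : eqType) (f : V -> V') : wmap f (wone V) = wone V'.
Proof. by apply: word_eq. Qed.

Lemma wmul1 (V : eqType) (a : word V) : wmul (wone V) a = a.
Proof. by apply: word_eq. Qed.

Section Q.
Variables (K : graph) (P : {set {set vert K}}) (hP : partition P [set: vert K]).

Lemma qmap_mem x : x \in sval (qmap hP x).
Proof. by rewrite /= mem_pblock; case/and3P: hP => /eqP -> _ _; rewrite inE. Qed.

Lemma qmap_def (B : vert (quot P)) x : x \in sval B -> B = qmap hP x.
Proof.
move=> Hx; apply: val_inj => /=; symmetry; apply: def_pblock => //.
  by case/and3P: hP.
exact: svalP B.
Qed.

Lemma quot_elem (B : vert (quot P)) : exists x, x \in sval B.
Proof.
case: B => B HB /=; apply/set0Pn; apply: contraTneq HB => ->.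
by case/and3P: hP.
Qed.

Lemma qmap_hom : ghom (qmap hP).
Proof.
move=> x y Hxy; apply/existsP; exists x; apply/existsP; exists y.
by rewrite !qmap_mem.
Qed.
End Q.

Lemma preim_mem (G : graph) (T : eqType) (g : vert G -> T) x y :
  (y \in sval (qmap (preim_partitionP g [set: vert G]) x)) = (g x == g y).
Proof.
rewrite /= /preim_partition pblock_equivalence_partition ?inE //.
by move=> u v w _ _ _; split=> // /eqP ->.
Qed.

Lemma qmap_eq (G : graph) (T : eqType) (g : vert G -> T) x y :
  g x = g y -> qmap (preim_partitionP g [set: vert G]) x = qmap (preim_partitionP g [set: vert G]) y.
Proof.
move=> E; apply: esym; apply: qmap_def; by rewrite preim_mem E.
Qed.

Lemma easy_map (F : forall K : graph, word (vert K) -> Prop) :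
  iso_closed F -> easy F -> full F ->
  forall (G K : graph) (g : vert G -> vert K) (x0 : vert G),
  (forall k, exists x, g x = k) -> ghom g ->
  (forall k k', adj k k' -> exists x y, [/\ g x = k, g y = k' & adj x y]) ->
  forall a, F G a -> F K (wmap g a).
Proof.
move=> Hiso Heasy Hfull G K g x0 Hsurj Hg Hadj a Ha.
pose hP := preim_partitionP g [set: vert G].
have := Heasy G (ex_intro _ a Ha) _ hP a Ha.
set Q := quot _.
pose psi (B : vert Q) := g (odflt x0 [pick x in sval B]).
have psiq x : psi (qmap hP x) = g x.
  rewrite /psi; case: pickP => [y|]; first by rewrite preim_mem => /eqP.
  by move/(_ x); rewrite qmap_mem.
pose psi' (k : vert K) : vert Q := qmap hP (odflt x0 [pick x | g x == k]).
have Hi : giso psi.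
  split.
    exists psi'.
      move=> B; have [x Hx] := quot_elem hP B; rewrite (qmap_def hP Hx) psiq /psi'.
      case: pickP => [y /eqP Hy|]; first exact: qmap_eq.
      by move/(_ x); rewrite eqxx.
    move=> k; rewrite /psi'; case: pickP => [y /eqP Hy|]; first by rewrite psiq.
    by have [x Hx] := Hsurj k => /(_ x); rewrite Hx eqxx.
  move=> B C; have [x Hx] := quot_elem hP B; have [y Hy] := quot_elem hP C.
  rewrite (qmap_def hP Hx) (qmap_def hP Hy) !psiq.
  apply/idP/existsP.
    move/Hadj=> [x' [y' [Ex Ey Hxy]]]; exists x'; apply/existsP; exists y'.
    by rewrite !preim_mem Ex Ey !eqxx.
  move=> [x' /existsP[y' /and3P[]]]; rewrite !preim_mem => /eqP -> /eqP ->.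
  exact: Hg.
move/(Hiso _ _ _ Hi); rewrite wmap_comp.
by rewrite (wmap_ext _ psiq).
Qed.

Lemma ovl0 (K H : graph) (p q : vert K * vert H) :
  p \in (set0 : {set vert K * vert H}) -> q \in (set0 : {set vert K * vert H}) -> (p.1 == q.1) = (p.2 == q.2).
Proof. by rewrite inE. Qed.

Theorem proposition2p18 (F : forall K : graph, word (vert K) -> Prop) :
  iso_closed F ->
  ((graph_fibration F /\ full F /\ easy F) <->
   ((forall K : graph, normal_subgroup (F K)) /\
    (forall (H K : graph) (phi : vert H -> vert K), ghom phi ->
       forall a, F H a -> F K (wmap phi a)))).
Proof.
move=> Hiso; split.
  move=> [[_ _ HF1 _ HF3] [Hfull Heasy]].
  have Hn : forall K, normal_subgroup (F K).
    move=> K; case: (HF1 K) => // Hno; have [a Ha] := Hfull K.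
    by case: (Hno a).
  split=> // H K phi Hphi a Ha.
  case: (pickP (fun _ : vert K => true)) => [k0 _|hnone]; last first.
    have -> : wmap phi a = wone _.
      apply: word_eq; case: a {Ha} => [[|h s] ?] //=.
      by have := hnone (phi h).
    by case: (Hn K).
  pose f0 := @Overlap K H set0 (@ovl0 K H).
  have Ha' : F (glue f0) (wmap (@fH K H f0) a).
    case: (Hn K) => H1 _ _ _.
    by have := HF3 K H f0 _ _ H1 Ha; rewrite wmap_one wmul1.
  pose g0 (x : vert (gsum K H)) : vert K :=
    match x with inl k => k | inr h => phi h end.
  pose g (B : vert (glue f0)) := g0 (odflt (inl k0) [pick x in sval B]).
  have grepE x : grep f0 x = x.
    by case: x => //= w; case: pickP => // v; rewrite inE.
  pose hPg := preim_partitionP (grep f0) [set: vert (gsum K H)].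
  have gq x : g (qmap hPg x) = g0 x.
    rewrite /g; case: pickP => [y|].
      by rewrite preim_mem !grepE => /eqP ->.
    by move/(_ x); rewrite qmap_mem.
  have := @easy_map F Hiso Heasy Hfull (glue f0) K g (fK f0 k0) _ _ _ _ Ha'.
  rewrite wmap_comp => /(_ _ _ _) Hk.
  rewrite -(wmap_ext _ (fun h => gq (inr h))); apply: Hk.
  - by move=> k; exists (fK f0 k); exact: (gq (inl k)).
  - move=> B C /existsP[x /existsP[y /and3P[Hx Hy Hxy]]].
    rewrite (qmap_def hPg Hx) (qmap_def hPg Hy) !gq.
    case: x y Hxy {Hx Hy} => [u|u] [v|v] //=; exact: Hphi.
  - move=> k k' Hkk'; exists (fK f0 k), (fK f0 k'); split.
    + exact: (gq (inl k)).
    + exact: (gq (inl k')).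
    + exact: (@qmap_hom (gsum K H) _ hPg (inl k) (inl k')).
move=> [Hn Hh].
have Hone : forall K, F K (wone _) by move=> K; case: (Hn K).
split; last split.
- split; [exact: Hone | exact: Hone | by move=> K; right | |].
  + move=> K phi [[phi' c1 c2] Hadj] b; split.
      move=> Hb; exists (wmap phi' b).
        apply: Hh Hb => x y Hxy; by rewrite -Hadj !c2.
      by rewrite wmap_comp (wmap_ext _ c2) wmap_id.
    move=> [a Ha ->]; apply: Hh Ha => x y; by rewrite Hadj.
  + move=> K H f a b Ha Hb; case: (Hn (glue f)) => _ Hmul _ _; apply: Hmul.
      apply: Hh Ha => x y Hxy.
      exact: (@qmap_hom (gsum K H) _ (preim_partitionP _ _) (inl x) (inl y)).
    apply: Hh Hb => x y Hxy.
    exact: (@qmap_hom (gsum K H) _ (preim_partitionP _ _) (inr x) (inr y)).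
- by move=> K; exists (wone _).
- move=> K _ P hP a Ha; apply: Hh Ha; exact: qmap_hom.
Qed.
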